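(* Let $G=(V,E)$ be a graph, $d\geq 1$, and let $\{u,v\}$ be an $\mathcal{R}_d$-loose vertex pair of $G$. Suppose that $F$ is a set of new edges on $V$ (pairs of vertices not adjacent in $G$) with $uv\notin F$. Then $\{u,v\}$ is $\mathcal{R}_{d+|F|}$-loose in $G+F$.
   Context: For a graph $G$, $\mathcal{R}_d(G)$ is the $d$-dimensional generic rigidity matroid on $E(G)$ (linear independence of rows of the rigidity matrix of a generic $d$-dimensional framework of $G$, i.e. one whose coordinates are algebraically independent over $\mathbb{Q}$), with rank function $r_d$; $r_d(H)$ denotes the rank of $E(H)$. A non-adjacent vertex pair $\{u,v\}$ of $G$ is $\mathcal{R}_d$-loose if $r_d(G+uv)=r_d(G)+1$, and $\mathcal{R}_d$-linked if $r_d(G+uv)=r_d(G)$. *)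

(* Defs.v *)
From HB Require Import structures.
From mathcomp Require Import all_boot all_order all_algebra.
From mathcomp Require Import reals.
From mathcomp Require Import mpoly.
Set Implicit Arguments. Unset Strict Implicit. Unset Printing Implicit Defensive.
Import GRing.Theory Num.Theory.
Local Open Scope ring_scope.

Definition simple_edges (V : finType) (E : {set {set V}}) : Prop :=
  forall e, e \in E -> #|e| = 2%N.

Definition coord (R : Type) (V : finType) (d : nat) (p : V -> 'rV[R]_d)
  (c : V * 'I_d) : R := p c.1 0 c.2.

(* Generic framework: all coordinates algebraically independent over Q,
   i.e. no nonzero rational polynomial in the #|V|*d coordinates vanishes. *)
Definition generic (R : realType) (V : finType) (d : nat) (p : V -> 'rV[R]_d) : Prop :=
  forall P : mpoly.mpoly #|{: V * 'I_d}| rat, P != 0 ->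
    mpoly.meval (fun j => coord p (enum_val j)) (mpoly.map_mpoly (fun q : rat => ratr q) P) != 0.

(* Rows are indexed by all subsets of V (rows of
   non-edges are zero, which does not affect the rank); the row of an edge
   e = {a, b} has entry p(a)_i - p(b)_i in column (a, i), p(b)_i - p(a)_i in
   column (b, i), and 0 elsewhere.  For w \in e the sum below equals
   p(w)_i - p(w')_i where e = {w, w'}. *)
Definition rigidity_matrix (R : fieldType) (V : finType) (d : nat)
  (E : {set {set V}}) (p : V -> 'rV[R]_d) : 'M[R]_(#|{: {set V}}|, #|{: V * 'I_d}|) :=
  \matrix_(k, c)
    (let e := enum_val k in let wi := enum_val c in
     if (e \in E) && (wi.1 \in e) then \sum_(x in e) (p wi.1 0 wi.2 - p x 0 wi.2)
     else 0).

(* rank of E in the d-dimensional generic rigidity matroid, as realised by the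
   generic framework p (independent of the choice of generic p). *)
Definition rank_at (R : realType) (V : finType) (d : nat)
  (E : {set {set V}}) (p : V -> 'rV[R]_d) : nat := \rank (rigidity_matrix E p).

Definition Rd_loose (R : realType) (V : finType) (d : nat)
  (E : {set {set V}}) (u v : V) : Prop :=
  [/\ u != v, [set u; v] \notin E &
      forall p : V -> 'rV[R]_d, generic p ->
        rank_at (E :|: [set [set u; v]]) p = (rank_at E p).+1 ].

(* Main.v *)
Require Import Defs.
From HB Require Import structures.
From mathcomp Require Import all_boot all_order all_algebra.
From mathcomp Require Import reals.
From mathcomp Require Import mpoly.
From mathcomp Require Import ring lra zify.
Set Implicit Arguments. Unset Strict Implicit. Unset Printing Implicit Defensive.
Import GRing.Theory Num.Theory.
Local Open Scope ring_scope.

Section RM.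
Variables (R : fieldType) (V : finType) (m : nat).
Local Notation N := #|{: V * 'I_m}|.

Definition vat (w : 'rV[R]_N) (x : V) (j : 'I_m) : R := w 0 (enum_rank (x, j)).


Lemma sum_cols (F : 'I_N -> R) :
  \sum_c F c = \sum_(x : V) \sum_(j < m) F (enum_rank (x, j)).
Proof.
rewrite (reindex (@enum_rank _)) /=; last first.
  by apply: onW_bij; exact: enum_rank_bij.
by rewrite pair_big /=; apply: eq_bigr => -[x j].
Qed.

Lemma row_sum (X : {set {set V}}) (p : V -> 'rV[R]_m) (x y : V) (w : 'rV[R]_N) :
  [set x; y] \in X -> x != y ->
  \sum_c rigidity_matrix X p (enum_rank [set x; y]) c * w 0 c =
  \sum_(i < m) (p x 0 i - p y 0 i) * (vat w x i - vat w y i).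
Proof.
move=> hX nxy.
rewrite sum_cols.
rewrite (bigD1 x) //= (bigD1 y) /=; last by rewrite eq_sym.
rewrite addrA [X in _ + X = _]big1 ?addr0; last first.
  move=> z /andP[zx zy]; apply: big1 => j _.
  rewrite mxE !enum_rankK /= hX /= !inE (negbTE zx) (negbTE zy).
  by rewrite mul0r.
rewrite -big_split /=; apply: eq_bigr => i _.
rewrite !mxE !enum_rankK /= hX /= !inE !eqxx /= orbT /=.
rewrite !big_setU1 ?inE // !big_set1 /=.
by rewrite /vat !subrr; ring.
Qed.

Lemma motionP (X : {set {set V}}) (p : V -> 'rV[R]_m) (w : 'rV[R]_N) :
  simple_edges X ->
  (w *m (rigidity_matrix X p)^T = 0) <->
  (forall x y, [set x; y] \in X -> x != y ->
     \sum_(i < m) (p x 0 i - p y 0 i) * (vat w x i - vat w y i) = 0).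
Proof.
move=> sX; split.
  move=> H x y hX nxy; rewrite -(row_sum p w hX nxy).
  have H' := congr1 (fun M : 'rV[R]_#|{: {set V}}| => M 0 (enum_rank [set x; y])) H.
  rewrite /= !mxE in H'; rewrite -[RHS]H'.
  by apply: eq_bigr => c _; rewrite !mxE mulrC.
move=> H; apply/rowP => k; rewrite !mxE.
case hk: (enum_val k \in X); last first.
  by apply: big1 => c _; rewrite !mxE /= hk /= mulr0.
have /eqP/cards2P [x [y [nxy ek]]] := sX _ hk.
have -> : k = enum_rank [set x; y] by rewrite -ek enum_valK.
have hX : [set x; y] \in X by rewrite -ek.
rewrite -[RHS](H x y hX nxy) -(row_sum p w hX nxy).
by apply: eq_bigr => c _; rewrite mxE mulrC.
Qed.

Lemma rank_kermot (X : {set {set V}}) (p : V -> 'rV[R]_m) :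
  \rank (kermx (rigidity_matrix X p)^T) = (N - \rank (rigidity_matrix X p))%N.
Proof. by rewrite mxrank_ker mxrank_tr. Qed.

Lemma rm_row (X : {set {set V}}) (p : V -> 'rV[R]_m) k :
  row k (rigidity_matrix X p) =
  if enum_val k \in X then row k (rigidity_matrix [set: {set V}] p) else 0.
Proof.
apply/rowP => c; rewrite !mxE /=; case: (enum_val k \in X) => /=; rewrite ?mxE /= ?inE //=.
Qed.

Lemma rm_mono (X Y : {set {set V}}) (p : V -> 'rV[R]_m) : X \subset Y ->
  (rigidity_matrix X p <= rigidity_matrix Y p)%MS.
Proof.
move=> sXY; apply/row_subP => k; rewrite rm_row.
case: ifP => h; last exact: sub0mx.
by have := rm_row Y p k; rewrite (subsetP sXY _ h) => <-; apply: row_sub.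
Qed.

Lemma rm_union (X Y : {set {set V}}) (p : V -> 'rV[R]_m) :
  (rigidity_matrix (X :|: Y) p :=: rigidity_matrix X p + rigidity_matrix Y p)%MS.
Proof.
apply/eqmxP/andP; split; last first.
  by rewrite addsmx_sub !rm_mono // ?subsetUl ?subsetUr.
apply/row_subP => k; rewrite rm_row inE.
case hX: (enum_val k \in X) => /=.
  have := rm_row X p k; rewrite hX => <-; apply: submx_trans (addsmxSl _ _); exact: row_sub.
case hY: (enum_val k \in Y) => /=; last exact: sub0mx.
have := rm_row Y p k; rewrite hY => <-; apply: submx_trans (addsmxSr _ _); exact: row_sub.
Qed.

Lemma rm_single_rank (e : {set V}) (p : V -> 'rV[R]_m) :
  (\rank (rigidity_matrix [set e] p) <= 1)%N.
Proof.
have : (rigidity_matrix [set e] p <= row (enum_rank e) (rigidity_matrix [set e] p))%MS.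
  apply/row_subP => k; rewrite rm_row inE.
  case: eqP => h; last exact: sub0mx.
  have := rm_row [set e] p k; rewrite inE h eqxx => <-.
  by rewrite -h enum_valK.
by move/mxrankS/leq_trans; apply; apply: rank_leq_row.
Qed.

Lemma rm_submod (X Y : {set {set V}}) (e : {set V}) (p : V -> 'rV[R]_m) :
  X \subset Y ->
  (\rank (rigidity_matrix (Y :|: [set e]) p) + \rank (rigidity_matrix X p) <=
   \rank (rigidity_matrix (X :|: [set e]) p) + \rank (rigidity_matrix Y p))%N /\
  (\rank (rigidity_matrix (X :|: [set e]) p) <= \rank (rigidity_matrix X p) + 1)%N.
Proof.
move=> sXY.
rewrite !(rm_union _ _ p).
have h1 := mxrank_sum_cap (rigidity_matrix X p) (rigidity_matrix [set e] p).
have h2 := mxrank_sum_cap (rigidity_matrix Y p) (rigidity_matrix [set e] p).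
have h3 : (\rank (rigidity_matrix X p :&: rigidity_matrix [set e] p) <=
          \rank (rigidity_matrix Y p :&: rigidity_matrix [set e] p))%N.
  by apply: mxrankS; apply: capmxS => //; apply: rm_mono.
have h4 := rm_single_rank e p.
split; lia.
Qed.

End RM.

Lemma comp_mpoly_assoc (n k l : nat) (p : {mpoly rat[n]})
  (lq : n.-tuple {mpoly rat[k]}) (lr : k.-tuple {mpoly rat[l]}) :
  (p \mPo lq) \mPo lr = p \mPo [tuple (tnth lq i) \mPo lr | i < n].
Proof.
rewrite (comp_mpolyEX p lq) raddf_sum (comp_mpolyEX p).
apply: eq_bigr => mo _ /=; rewrite comp_mpolyZ; congr (_ *: _).
rewrite !comp_mpolyX rmorph_prod; apply: eq_bigr => i _.
by rewrite rmorphXn tnth_map tnth_ord_tuple.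
Qed.

Section Gen.
Variables (R : realType) (V : finType) (m : nat).
Local Notation N := #|{: V * 'I_m}|.

Definition ev (p : V -> 'rV[R]_m) (P : {mpoly rat[N]}) : R :=
  mpoly.meval (fun j => Defs.coord p (enum_val j)) (mpoly.map_mpoly (fun q : rat => ratr q) P).

Lemma generic_ev (g : V -> 'rV[R]_m) (y : V -> 'rV[R]_m) (P : {mpoly rat[N]}) :
  generic g -> ev y P != 0 -> ev g P != 0.
Proof.
move=> gg hy; apply: gg; apply: contraNneq hy => ->.
by rewrite /ev raddf0 meval0.
Qed.

Definition Msym (X : {set {set V}}) : 'M[{mpoly rat[N]}]_(#|{: {set V}}|, N) :=
  \matrix_(k, c)
    (let e := enum_val k in let wi := enum_val c in
     if (e \in X) && (wi.1 \in e) then \sum_(x in e) ('X_c - 'X_(enum_rank (x, wi.2)))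
     else 0).

Definition evr (p : V -> 'rV[R]_m) : {rmorphism {mpoly rat[N]} -> R} :=
  (mpoly.meval (fun j => Defs.coord p (enum_val j))) \o (mpoly.map_mpoly (fun q : rat => ratr q)).

Lemma evrE p P : ev p P = evr p P. Proof. by []. Qed.

Lemma rm_sym (X : {set {set V}}) (p : V -> 'rV[R]_m) :
  rigidity_matrix X p = map_mx (evr p) (Msym X).
Proof.
apply/matrixP => k c; rewrite !mxE; cbv zeta.
case: ifP => _; last by rewrite rmorph0.
rewrite rmorph_sum; apply: eq_bigr => x _.
rewrite rmorphB /= !map_mpolyX !mevalXU /Defs.coord enum_rankK.
done.
Qed.

Lemma maxrank (g y : V -> 'rV[R]_m) (X : {set {set V}}) :
  generic g -> (\rank (rigidity_matrix X y) <= \rank (rigidity_matrix X g))%N.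
Proof.
move=> gg.
set A := rigidity_matrix X y.
have fB := maxrowsub_free A.
set f := maxrankfun A in fB.
have hfull : row_full (rowsub f A)^T.
  by rewrite /row_full mxrank_tr; exact: fB.
have hU := fullrowsub_unit hfull.
set g' := fullrankfun hfull in hU.
pose Cs := rowsub g' (rowsub f (Msym X))^T.
have hC : rowsub g' (rowsub f A)^T = map_mx (evr y) Cs.
  have eA : forall i j, A i j = evr y (Msym X i j) by move=> i j; rewrite /A rm_sym mxE.
  apply/matrixP => i j; rewrite !mxE.
  by have := congr1 (fun M : 'M_(_, _) => M (f j) (g' i)) (rm_sym X y); rewrite !mxE.
have hdet : ev y (\det Cs) != 0.
  by rewrite evrE -det_map_mx -hC -unitfE -unitmxE.
have := generic_ev gg hdet; rewrite evrE -det_map_mx.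
have -> : map_mx (evr g) Cs = rowsub g' (rowsub f (rigidity_matrix X g))^T.
  apply/matrixP => i j; rewrite !mxE.
  by have := congr1 (fun M : 'M_(_, _) => M (f j) (g' i)) (rm_sym X g); rewrite !mxE.
rewrite -unitfE -unitmxE => /mxrank_unit hr.
apply: (@leq_trans (\rank (rowsub g' (rowsub f (rigidity_matrix X g))^T))).
  by rewrite hr.
apply: leq_trans (mxrankS (rowsub_sub _ _)) _.
rewrite mxrank_tr; exact: mxrankS (rowsub_sub _ _).
Qed.

End Gen.

Lemma widen_lift d (i : 'I_d) : widen_ord (leqnSn d) i = lift ord_max i.
Proof. by apply: ord_inj; rewrite lift_max. Qed.

Lemma unlift_widen d (i : 'I_d) : unlift ord_max (widen_ord (leqnSn d) i) = Some i.
Proof. by rewrite widen_lift liftK. Qed.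

Lemma generic_restr (R : realType) (V : finType) (d : nat) (q : V -> 'rV[R]_d.+1) :
  generic q -> generic (fun x => \row_(i < d) q x 0 (widen_ord (leqnSn d) i)).
Proof.
move=> gq P nzP.
pose lq : #|{: V * 'I_d}|.-tuple {mpoly rat[#|{: V * 'I_d.+1}|]} :=
  [tuple 'X_(enum_rank ((enum_val j).1, widen_ord (leqnSn d) (enum_val j).2)) | j < #|{: V * 'I_d}|].
pose lr : #|{: V * 'I_d.+1}|.-tuple {mpoly rat[#|{: V * 'I_d}|]} :=
  [tuple (if unlift ord_max (enum_val c).2 is Some i then 'X_(enum_rank ((enum_val c).1, i)) else 0)
   | c < #|{: V * 'I_d.+1}|].
have back : (P \mPo lq) \mPo lr = P.
  rewrite comp_mpoly_assoc -[RHS]comp_mpoly_id; congr (P \mPo _).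
  apply: eq_from_tnth => j; rewrite !tnth_map !tnth_ord_tuple comp_mpolyXU -tnth_nth.
  rewrite tnth_map tnth_ord_tuple enum_rankK /= unlift_widen.
  by rewrite -surjective_pairing enum_valK.
have nzQ : P \mPo lq != 0.
  by apply: contraNneq nzP => hQ; rewrite -back hQ comp_mpoly0.
have := gq _ nzQ.
rewrite map_mpoly_comp; last exact: fmorph_inj.
rewrite comp_mpoly_meval.
congr (_ != 0); apply: meval_eq => j.
by rewrite tnth_map /lq tnth_map tnth_ord_tuple map_mpolyX mevalXU /Defs.coord enum_rankK /= mxE.
Qed.

Lemma generic_neq (R : realType) (V : finType) (m : nat) (q : V -> 'rV[R]_m) (x a : V) (j : 'I_m) :
  generic q -> x != a -> q x 0 j - q a 0 j != 0.
Proof.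
move=> gq nxa.
pose P : {mpoly rat[#|{: V * 'I_m}|]} := 'X_(enum_rank (x, j)) - 'X_(enum_rank (a, j)).
have nzP : P != 0.
  apply/eqP => /(congr1 (mcoeff U_(enum_rank (x, j)))).
  rewrite /P mcoeffB !mcoeffXU eqxx mcoeff0.
  have -> : (enum_rank (a, j) == enum_rank (x, j)) = false.
    by apply/negbTE; apply: contra nxa => /eqP /enum_rank_inj [->].
  by move/eqP; rewrite subr0 oner_eq0.
have := gq _ nzP.
by rewrite raddfB /= !map_mpolyX mevalB !mevalXU /Defs.coord !enum_rankK.
Qed.

Lemma widen_lift' d (i : 'I_d) : widen_ord (leqnSn d) i = lift ord_max i.
Proof. by apply: ord_inj; rewrite lift_max. Qed.

Section Geo.
Variables (R : fieldType) (V : finType).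

Lemma vat_mul m1 m2 (w : 'rV[R]_#|{: V * 'I_m1}|) (A : 'M[R]_(#|{: V * 'I_m1}|, #|{: V * 'I_m2}|)) x j :
  vat (w *m A) x j = \sum_z \sum_(k < m1) vat w z k * A (enum_rank (z, k)) (enum_rank (x, j)).
Proof. by rewrite /vat mxE sum_cols. Qed.

Lemma enum_rank_val m (c : 'I_#|{: V * 'I_m}|) : c = enum_rank ((enum_val c).1, (enum_val c).2).
Proof. by rewrite -surjective_pairing enum_valK. Qed.

Lemma edge_sym m (p : V -> 'rV[R]_m) (w : 'rV[R]_#|{: V * 'I_m}|) x y :
  \sum_(i < m) (p x 0 i - p y 0 i) * (vat w x i - vat w y i) =
  \sum_(i < m) (p y 0 i - p x 0 i) * (vat w y i - vat w x i).
Proof. by apply: eq_bigr => i _; ring. Qed.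

Lemma motionP' (X : {set {set V}}) m (p : V -> 'rV[R]_m) (w : 'rV[R]_#|{: V * 'I_m}|) x y :
  simple_edges X -> w *m (rigidity_matrix X p)^T = 0 -> [set x; y] \in X -> x != y ->
     \sum_(i < m) (p x 0 i - p y 0 i) * (vat w x i - vat w y i) = 0.
Proof. by move=> sX /(motionP p w sX) H; apply: H. Qed.

Lemma ker_rows m m1 n (Z : 'M[R]_(m1, n)) (B : 'M[R]_(n, m)) (v : 'rV[R]_n) :
  (v <= kermx B)%MS -> v *m B = 0.
Proof. by move/sub_kermxP. Qed.

Lemma sub_mul0 m1 m2 n p (Z : 'M[R]_(m1, n)) (B : 'M[R]_(n, p)) (v : 'M[R]_(m2, n)) :
  Z *m B = 0 -> (v <= Z)%MS -> v *m B = 0.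
Proof. by move=> hZ /submxP [k ->]; rewrite -mulmxA hZ mulmx0. Qed.

Variables (d : nat) (a : V).
Local Notation D := d.+1.
Local Notation wd i := (widen_ord (leqnSn d) i).
Local Notation ND := #|{: V * 'I_D}|.
Local Notation Nd := #|{: V * 'I_d}|.

Definition q0 (y : V -> 'rV[R]_d) (x : V) : 'rV[R]_D :=
  if x == a then 0 else \row_j (if unlift ord_max j is Some i then y x 0 i else 1).

Lemma q0_wd y x i : q0 y x 0 (wd i) = if x == a then 0 else y x 0 i.
Proof. by rewrite /q0; case: eqP => _; rewrite mxE // widen_lift' liftK. Qed.

Lemma q0_lst y x : q0 y x 0 ord_max = if x == a then 0 else 1.
Proof. by rewrite /q0; case: eqP => _; rewrite mxE // unlift_none. Qed.

Definition Pi : 'M[R]_(ND, Nd) :=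
  \matrix_(r, c) (((enum_val r).1 == (enum_val c).1) && ((enum_val r).2 == wd (enum_val c).2))%:R.

Lemma sum_delta m (F : V -> 'I_m -> R) x j :
  \sum_z \sum_(k < m) F z k * ((z == x) && (k == j))%:R = F x j.
Proof.
rewrite (bigD1 x) //= [X in _ + X = _]big1 ?addr0; last first.
  by move=> z zx; apply: big1 => k _; rewrite (negbTE zx) /= mulr0.
rewrite (bigD1 j) //= [X in _ + X = _]big1 ?addr0 ?eqxx ?mulr1 //.
by move=> k kj; rewrite (negbTE kj) andbF /= mulr0.
Qed.

Lemma vat_Pi w x i : vat (w *m Pi) x i = vat w x (wd i).
Proof.
rewrite vat_mul -[RHS](sum_delta (fun z k => vat w z k) x (wd i)).
apply: eq_bigr => z _; apply: eq_bigr => k _.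
by rewrite mxE !enum_rankK.
Qed.

Definition tau : 'rV[R]_ND := \row_c ((enum_val c).2 == ord_max)%:R.

Lemma L1 (X H : {set {set V}}) (y : V -> 'rV[R]_d) :
  simple_edges X -> simple_edges H -> (forall x, x != a -> [set a; x] \in X) ->
  H \subset X -> (forall e, e \in H -> a \notin e) ->
  (\rank (kermx (rigidity_matrix X (q0 y))^T) <=
   \rank (kermx (rigidity_matrix H y)^T) + 1)%N.
Proof.
move=> sX sH cone sHX Ha.
set Z := kermx (rigidity_matrix X (q0 y))^T.
have hZ : Z *m (rigidity_matrix X (q0 y))^T = 0 by apply: mulmx_ker.
rewrite -(mxrank_mul_ker Z Pi); apply: leq_add.
  apply: mxrankS; apply/sub_kermxP; apply/row_matrixP => r.
  rewrite row0 2!row_mul; set w := row r Z.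
  have hw : w *m (rigidity_matrix X (q0 y))^T = 0 by rewrite -row_mul hZ row0.
  apply/(motionP y _ sH) => x x' hxx' nxx'.
  have := motionP' sX hw (subsetP sHX _ hxx') nxx'.
  have xa : x != a by apply: contraNneq (Ha _ hxx') => <-; rewrite !inE eqxx.
  have x'a : x' != a by apply: contraNneq (Ha _ hxx') => <-; rewrite !inE eqxx orbT.
  rewrite big_ord_recr /= !q0_lst (negbTE xa) (negbTE x'a) subrr mul0r addr0 => h.
  rewrite -[RHS]h; apply: eq_bigr => i _.
  by rewrite !vat_Pi !q0_wd (negbTE xa) (negbTE x'a).
apply: leq_trans (rank_leq_row tau).
apply: mxrankS; apply/row_subP => r; set v := row r _.
have vZ : (v <= Z)%MS by apply: submx_trans (row_sub _ _) (capmxSl _ _).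
have vP : v *m Pi = 0.
  by apply/sub_kermxP; apply: submx_trans (row_sub _ _) (capmxSr _ _).
have vM := sub_mul0 hZ vZ.
suff -> : v = vat v a ord_max *: tau by apply: scalemx_sub.
apply/rowP => c; rewrite [c]enum_rank_val; set x := (enum_val c).1; set j := (enum_val c).2.
rewrite !mxE enum_rankK /=.
case: (unliftP ord_max j) => [i ->|->].
  have := congr1 (fun M : 'rV_Nd => vat M x i) vP.
  rewrite vat_Pi /vat mxE -widen_lift' => ->.
  by rewrite mxE widen_lift' eq_sym (negbTE (neq_lift _ _)) mulr0.
rewrite eqxx mulr1.
have [xa|xa] := eqVneq x a; first by rewrite xa /vat mxE.
have ax : a != x by rewrite eq_sym.
have hv0 : forall z i, vat v z (wd i) = 0.
  move=> z i; have := congr1 (fun M : 'rV_Nd => vat M z i) vP.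
  by rewrite vat_Pi /vat [in RHS]mxE.
have := motionP' sX vM (cone x xa) ax.
rewrite big_ord_recr /= big1 => [|i _]; last by rewrite !hv0 subrr mulr0.
rewrite !q0_lst eqxx (negbTE xa) add0r sub0r mulN1r => /eqP.
rewrite oppr_eq0 subr_eq0 => /eqP ->.
by rewrite /vat mxE.
Qed.

Lemma sum_d1 m (F : 'I_m -> R) i : \sum_(k < m) F k * (i == k)%:R = F i.
Proof.
rewrite (bigD1 i) //= eqxx mulr1 [X in _ + X = _]big1 ?addr0 // => k ki.
by rewrite eq_sym (negbTE ki) mulr0.
Qed.

Lemma sum_at (G : V -> R) x : \sum_z (if z == x then G z else 0) = G x.
Proof. by rewrite -big_mkcond big_pred1_eq. Qed.

Variable q : V -> 'rV[R]_D.
Definition tq x := q x 0 ord_max - q a 0 ord_max.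
Definition pp x : 'rV[R]_d := \row_(i < d) ((q x 0 (wd i) - q a 0 (wd i)) / tq x).

Definition Lam : 'M[R]_(Nd, ND) :=
  \matrix_(r, c)
    ((if (enum_val r).1 == a then ((enum_val c).2 == wd (enum_val r).2)%:R else 0) +
     (if ((enum_val c).1 == (enum_val r).1) && ((enum_val r).1 != a) then
        (if unlift ord_max (enum_val c).2 is Some i then (i == (enum_val r).2)%:R * tq (enum_val c).1
         else - (tq (enum_val c).1 * pp (enum_val c).1 0 (enum_val r).2))
      else 0)).

Definition LV (w : 'rV[R]_Nd) x (j : 'I_D) : R :=
  (if unlift ord_max j is Some i then vat w a i else 0) +
  (if x == a then 0 else
     if unlift ord_max j is Some i then tq x * vat w x i
     else - (tq x * \sum_(i < d) pp x 0 i * vat w x i)).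

Lemma vat_Lam w x j : vat (w *m Lam) x j = LV w x j.
Proof.
rewrite vat_mul /LV.
rewrite (eq_bigr (fun z => \sum_(k < d) (vat w z k * (if z == a then (j == wd k)%:R else 0) +
   vat w z k * (if (x == z) && (z != a) then
        (if unlift ord_max j is Some i then (i == k)%:R * tq x
         else - (tq x * pp x 0 k)) else 0)))); last first.
  by move=> z _; apply: eq_bigr => k _; rewrite mxE !enum_rankK /= mulrDr.
rewrite (eq_bigr (fun z => \sum_(k < d) vat w z k * (if z == a then (j == wd k)%:R else 0) +
   \sum_(k < d) vat w z k * (if (x == z) && (z != a) then
        (if unlift ord_max j is Some i then (i == k)%:R * tq x
         else - (tq x * pp x 0 k)) else 0))); last by move=> z _; rewrite big_split.
rewrite big_split /=; congr (_ + _).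
  rewrite (eq_bigr (fun z => if z == a then \sum_(k < d) vat w z k * (j == wd k)%:R else 0)); last first.
    by move=> z _; case: eqP => _ //; rewrite big1 // => k _; rewrite mulr0.
  rewrite sum_at; case: (unliftP ord_max j) => [i ->|->].
    rewrite -widen_lift' (eq_bigr (fun k => vat w a k * (i == k)%:R)) ?sum_d1 // => k _.
  by rewrite big1 // => k _; rewrite widen_lift' (negbTE (neq_lift _ _)) mulr0.
rewrite (eq_bigr (fun z => if z == x then (if z == a then 0 else \sum_(k < d) vat w z k *
        (if unlift ord_max j is Some i then (i == k)%:R * tq x
         else - (tq x * pp x 0 k))) else 0)); last first.
  move=> z _; rewrite eq_sym; case: eqP => [->|_]; last by rewrite big1 // => k _; rewrite mulr0.
  by case: eqP => _ /=; [rewrite big1 // => k _; rewrite mulr0 | ].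
rewrite sum_at; case: eqP => // _.
case: (unliftP ord_max j) => [i _|_] /=.
  rewrite (eq_bigr (fun k => tq x * (vat w x k * (i == k)%:R))) -?mulr_sumr ?sum_d1 // => k _.
  by rewrite mulrA mulrC mulrA.
rewrite mulr_sumr -sumrN; apply: eq_bigr => k _; ring.
Qed.

Lemma alg1 n (tx ty c : R) (px py wx wy wa ca : 'I_n -> R) :
  \sum_(i < n) ((tx * px i + ca i) - (ty * py i + ca i)) * ((wa i + tx * wx i) - (wa i + ty * wy i)) +
  ((tx + c) - (ty + c)) * ((0 + - (tx * \sum_(i < n) px i * wx i)) - (0 + - (ty * \sum_(i < n) py i * wy i)))
  = tx * ty * \sum_(i < n) (px i - py i) * (wx i - wy i).
Proof.
rewrite !add0r opprK !mulr_sumr -sumrN -big_split mulr_sumr -big_split.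
apply: eq_bigr => i _ /=; ring.
Qed.

Lemma alg2 n (tx c : R) (px wx wa ca : 'I_n -> R) :
  \sum_(i < n) (ca i - (tx * px i + ca i)) * ((wa i + 0) - (wa i + tx * wx i)) +
  (c - (tx + c)) * ((0 + 0) - (0 + - (tx * \sum_(i < n) px i * wx i))) = 0.
Proof.
rewrite !add0r opprK mulr_sumr mulr_sumr -big_split; apply: big1 => i _ /=; rewrite addr0; ring.
Qed.

Lemma unlift_wd i : unlift ord_max (wd i) = Some i.
Proof. by rewrite widen_lift' liftK. Qed.

Lemma hq z i : tq z != 0 -> q z 0 (wd i) = tq z * pp z 0 i + q a 0 (wd i).
Proof. by move=> tz; rewrite mxE mulrC divfK //; ring. Qed.

Lemma hqlst z : q z 0 ord_max = tq z + q a 0 ord_max.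
Proof. by rewrite /tq; ring. Qed.

Lemma lam_edge w x y : x != a -> y != a -> tq x != 0 -> tq y != 0 ->
  \sum_(i < d) (pp x 0 i - pp y 0 i) * (vat w x i - vat w y i) = 0 ->
  \sum_(j < D) (q x 0 j - q y 0 j) * (vat (w *m Lam) x j - vat (w *m Lam) y j) = 0.
Proof.
move=> xa ya tx ty H.
rewrite big_ord_recr /= !vat_Lam /LV unlift_none (negbTE xa) (negbTE ya) (hqlst x) (hqlst y).
under eq_bigr do rewrite !vat_Lam /LV unlift_wd (negbTE xa) (negbTE ya) (hq _ tx) (hq _ ty).
by rewrite alg1 H mulr0.
Qed.

Lemma lam_cone w x : x != a -> tq x != 0 ->
  \sum_(j < D) (q a 0 j - q x 0 j) * (vat (w *m Lam) a j - vat (w *m Lam) x j) = 0.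
Proof.
move=> xa tx.
rewrite big_ord_recr /= !vat_Lam /LV unlift_none eqxx (negbTE xa) [q x _ _]hqlst.
under eq_bigr do rewrite !vat_Lam /LV unlift_wd eqxx (negbTE xa) (hq _ tx).
exact: alg2.
Qed.

Lemma Lam_free : (forall x, x != a -> tq x != 0) -> row_free Lam.
Proof.
move=> ht; rewrite -kermx_eq0 -submx0; apply/row_subP => r.
set v := row r (kermx Lam).
have hv : v *m Lam = 0 by apply/sub_kermxP; apply: row_sub.
have hva : forall i, vat v a i = 0.
  move=> i; have := congr1 (fun M : 'rV_ND => vat M a (wd i)) hv.
  by rewrite vat_Lam /LV unlift_wd eqxx addr0 /vat [in RHS]mxE.
have hvx : forall x i, vat v x i = 0.
  move=> x i; have [->|xa] := eqVneq x a; first exact: hva.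
  have := congr1 (fun M : 'rV_ND => vat M x (wd i)) hv.
  rewrite vat_Lam /LV unlift_wd (negbTE xa) hva add0r /vat [in RHS]mxE.
  by move/eqP; rewrite mulf_eq0 (negbTE (ht x xa)) /= => /eqP.
suff -> : v = 0 by apply: sub0mx.
apply/rowP => c; rewrite [c]enum_rank_val.
by have := hvx (enum_val c).1 (enum_val c).2; rewrite /vat => ->; rewrite mxE.
Qed.

Definition ea : 'M[R]_(ND, 1) := \col_c (enum_val c == (a, ord_max))%:R.

Lemma Lam_ea : Lam *m ea = 0.
Proof.
apply/matrixP => r c0; rewrite !mxE sum_cols.
rewrite (eq_bigr (fun z => \sum_(k < D) Lam r (enum_rank (z, k)) * ((z == a) && (k == ord_max))%:R)).
  rewrite sum_delta !mxE !enum_rankK /=.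
  case: eqP => [->|]; last by rewrite add0r; case: ifP => //; case/andP => /eqP -> /eqP.
  by rewrite andbF addr0 widen_lift' (negbTE (neq_lift _ _)).
by move=> z _; apply: eq_bigr => k _; rewrite !mxE enum_rankK.
Qed.

Lemma tau_ea : tau *m ea = 1%:M.
Proof.
apply/matrixP => r c0; rewrite !ord1 !mxE sum_cols /=.
rewrite (eq_bigr (fun z => \sum_(k < D) (k == ord_max)%:R * ((z == a) && (k == ord_max))%:R)).
  by rewrite (sum_delta (fun z (k : 'I_D) => (k == ord_max)%:R)) eqxx.
by move=> z _; apply: eq_bigr => k _; rewrite !mxE enum_rankK.
Qed.

Lemma tau_motion (X : {set {set V}}) (p : V -> 'rV[R]_D) :
  simple_edges X -> tau *m (rigidity_matrix X p)^T = 0.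
Proof.
move=> sX; apply/(motionP p tau sX) => x y _ _; apply: big1 => j _.
by rewrite /vat !mxE !enum_rankK subrr mulr0.
Qed.

Lemma L2 (X H : {set {set V}}) :
  simple_edges X -> simple_edges H -> (forall e, e \in X -> a \notin e -> e \in H) ->
  (forall x, x != a -> tq x != 0) ->
  (\rank (kermx (rigidity_matrix H pp)^T) + 1 <= \rank (kermx (rigidity_matrix X q)^T))%N.
Proof.
move=> sX sH hXH ht.
set Z := kermx (rigidity_matrix X q)^T.
rewrite -(mxrank_mul_ker Z ea) addnC; apply: leq_add.
  have tZ : (tau <= Z)%MS by apply/sub_kermxP; apply: tau_motion.
  by apply: leq_trans (mxrankS (submxMr ea tZ)); rewrite tau_ea mxrank1.
rewrite -(mxrankMfree _ (Lam_free ht)).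
apply: mxrankS; rewrite sub_capmx; apply/andP; split; last first.
  by apply/sub_kermxP; rewrite -mulmxA Lam_ea mulmx0.
apply/sub_kermxP; apply/row_matrixP => r; rewrite row0 2!row_mul.
set w := row r (kermx _).
have hw : w *m (rigidity_matrix H pp)^T = 0 by rewrite -row_mul mulmx_ker row0.
apply/(motionP q _ sX) => x y hxy nxy.
have [xa|xa] := eqVneq x a.
  have ya : y != a by rewrite -xa eq_sym.
  by rewrite xa; apply: lam_cone => //; apply: ht.
have [ya|ya] := eqVneq y a.
  by rewrite ya edge_sym; apply: lam_cone => //; apply: ht.
apply: lam_edge => //; try exact: ht.
apply: (motionP' sH hw) => //; apply: hXH hxy _.
by rewrite !inE negb_or eq_sym xa eq_sym ya.
Qed.

End Geo.

Lemma step (R : realType) (V : finType) (E : {set {set V}}) (d : nat) (u v : V) (f : {set V}) :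
  simple_edges E -> Rd_loose R d E u v -> #|f| = 2%N -> f \notin E -> f != [set u; v] ->
  Rd_loose R d.+1 (E :|: [set f]) u v.
Proof.
move=> sE [nuv nE hE] f2 fE fuv.
have [a [b [nab fab au av]]] : exists a b, [/\ a != b, f = [set a; b], a != u & a != v].
  have /eqP/cards2P [a [b [nab fab]]] := f2.
  case: (boolP ((a == u) || (a == v))) => ha; last first.
    by exists a, b; move: ha; rewrite negb_or => /andP [h1 h2]; split.
  case: (boolP ((b == u) || (b == v))) => hb; last first.
    exists b, a; move: hb; rewrite negb_or => /andP [h1 h2]; split => //.
      by rewrite eq_sym.
    by rewrite fab setUC.
  exfalso; move: fuv; rewrite fab.
  case/orP: ha => /eqP ha; case/orP: hb => /eqP hb; subst a b.
  - by move: nab; rewrite eqxx.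
  - by rewrite eqxx.
  - by rewrite setUC eqxx.
  - by move: nab; rewrite eqxx.
split => //.
  by rewrite !inE negb_or nE /= eq_sym.
move=> q gq.
set y := fun x => \row_(i < d) q x 0 (widen_ord (leqnSn d) i).
have gy : generic y by apply: generic_restr.
pose H := [set e in E | a \notin e].
pose cone := [set e : {set V} | [exists x, (x != a) && (e == [set a; x])]].
pose K := (E :|: [set f]) :|: cone.
pose uvE := [set [set u; v]].
have sH : simple_edges H by move=> e; rewrite inE => /andP [/sE].
have scone : simple_edges cone.
  move=> e; rewrite inE => /existsP [x /andP [xa /eqP ->]].
  by rewrite cards2 eq_sym xa.
have suv : simple_edges uvE by move=> e; rewrite inE => /eqP ->; rewrite cards2 nuv.
have sK : simple_edges K.
  move=> e; rewrite !inE -orbA => /or3P [/sE|/eqP ->|] //.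
  by move=> he; apply: scone; rewrite inE.
have sKuv : simple_edges (K :|: uvE).
  by move=> e; rewrite inE => /orP [/sK|/suv].
have sHuv : simple_edges (H :|: uvE).
  by move=> e; rewrite inE => /orP [/sH|/suv].
have hHE : H \subset E by apply/subsetP => e; rewrite inE => /andP [].
have hEK : E :|: [set f] \subset K by apply: subsetUl.
have hy := hE y gy.
have [hs1 hs2] := rm_submod [set u; v] y hHE.
have [hs3 hs4] := rm_submod [set u; v] q hEK.
have ht : forall x, x != a -> tq a q x != 0.
  by move=> x xa; rewrite /tq; apply: generic_neq.
have hKH : forall e, e \in K -> a \notin e -> e \in H.
  move=> e; rewrite !inE -orbA => /or3P [heE|/eqP ->|/existsP [x /andP [_ /eqP ->]]] hae.
  - by rewrite heE hae.
  - by move: hae; rewrite fab !inE eqxx.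
  - by move: hae; rewrite !inE eqxx.
have hL2 := L2 sK sH hKH ht.
have hcone : forall x, x != a -> [set a; x] \in K :|: uvE.
  move=> x xa; rewrite !inE; apply/orP; left; apply/orP; right.
  by apply/existsP; exists x; rewrite xa eqxx.
have hsub : H :|: uvE \subset K :|: uvE.
  by apply: setSU; apply: subset_trans hHE (subset_trans (subsetUl _ _) (subsetUl _ _)).
have havoid : forall e, e \in H :|: uvE -> a \notin e.
  move=> e; rewrite !inE => /orP [/andP [_ h] | /eqP ->] //.
  by rewrite !inE negb_or au av.
have hL1 := L1 y sKuv sHuv hcone hsub havoid.
have m1 := maxrank (q0 a y) (K :|: uvE) gq.
have m2 := maxrank (pp a q) H gy.
rewrite !rank_kermot in hL1 hL2.
have b1 := rank_leq_col (rigidity_matrix (K :|: uvE) (q0 a y)).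
have b2 := rank_leq_col (rigidity_matrix (H :|: uvE) y).
have b3 := rank_leq_col (rigidity_matrix H (pp a q)).
have b4 := rank_leq_col (rigidity_matrix K q).
have b5 := rank_leq_col (rigidity_matrix H y).
rewrite /rank_at in hy *.
rewrite /uvE in hL1 hL2 m1 b1 b2.
lia.
Qed.

Theorem lemma2p6 (R : realType) (V : finType) (E F : {set {set V}})
  (d : nat) (u v : V) :
  simple_edges E -> (0 < d)%N ->
  Rd_loose R d E u v ->
  simple_edges F -> [disjoint E & F] -> [set u; v] \notin F ->
  Rd_loose R (d + #|F|) (E :|: F) u v.
Proof.
move=> sE _ hL.
move: {2}#|F| (erefl #|F|) => n.
elim: n F => [|n IH] F hn sF dEF nF.
  rewrite hn addn0; have -> : F = set0 by apply: cards0_eq.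
  by rewrite setU0.
have [f fF] : exists f, f \in F.
  by apply/set0Pn; rewrite -card_gt0 hn.
set F' := F :\ f.
have hF' : #|F'| = n by move: hn; rewrite (cardsD1 f F) fF add1n => -[].
have sF' : simple_edges F' by move=> e; rewrite inE => /andP [_ /sF].
have dEF' : [disjoint E & F'] by apply: disjointWr dEF; apply: subD1set.
have nF' : [set u; v] \notin F' by rewrite inE negb_and nF orbT.
have IH' := IH F' hF' sF' dEF' nF'.
have sE' : simple_edges (E :|: F').
  by move=> e; rewrite inE => /orP [/sE | /sF'].
have fE' : f \notin E :|: F'.
  by rewrite inE negb_or (disjointFl dEF fF) /= !inE eqxx.
have fuv : f != [set u; v] by apply: contraNneq nF => <-.
have := step sE' IH' (sF f fF) fE' fuv.
have -> : E :|: F' :|: [set f] = E :|: F.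
  by rewrite -setUA [F' :|: _]setUC setD1K.
by rewrite hn addnS hF'.
Qed.
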